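(* The set consisting of the 1-in-3 gadget, the free terminal, and fanout gates parsimoniously simulates the NOR gate (via a planar simulation).
   Context: A gadget consists of a finite set of ports, equipped with a cyclic order, and a constraint, which is a set of subsets of the ports. A network of gadgets from $S$ is a finite undirected multigraph whose vertices are labeled by gadgets from $S$, each vertex's edge incidences being in bijection with the ports of its label. An assignment orients every edge; a vertex is satisfied if the set of its ports whose edges point into it belongs to its constraint. A simulation using gadgets from $S$ is a network of gadgets from $S$ that may additionally have dangling edges, each incident to only one vertex (equivalently, an extra outside-world vertex whose constraint contains every subset). It is planar if the graph including the outside world has a planar embedding respecting the port cyclic orders; the simulated gadget's ports are then the dangling edges in their order around the simulation. The simulated gadget's constraint consists of each set $D$ of dangling edges such that some assignment satisfying every non-outside-world vertex makes exactly the dangling edges in $D$ point into the simulation. A simulation is parsimonious if for each set in the simulated gadget's constraint there is exactly one such satisfying assignment realizing it; $S$ parsimoniously simulates $G$ if some parsimonious simulation using gadgets from $S$ has simulated gadget $G$. Gadgets: 1-in-3 gadget: ports $a,b,c$, constraint $\{\{a\},\{b\},\{c\}\}$. Free terminal: one port $a$, constraint $\{\emptyset,\{a\}\}$. $k$-way fanout gate: ports $a,c_1,\dots,c_k$, constraint $\{\{a\},\{c_1,\dots,c_k\}\}$. NOR gate: ports $a,b,c$, constraint $\{\emptyset,\{a,c\},\{b,c\},\{a,b,c\}\}$. *)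

(* Defs.v *)
From mathcomp Require Import all_boot.
Set Implicit Arguments. Unset Strict Implicit. Unset Printing Implicit Defensive.

(** A gadget: ports 'I_n, in the cyclic order 0,1,...,n-1, and a constraint,
    i.e. a set of subsets of the ports. *)
Record gadget := Gadget { gports : nat; gcon : {set {set 'I_gports}} }.

Definition one_in_three : gadget :=
  @Gadget 3 [set [set (@inord 2 0)]; [set (@inord 2 1)]; [set (@inord 2 2)]].

Definition free_terminal : gadget :=
  @Gadget 1 [set set0; [set (@ord0 0)]].

Definition fanout (k : nat) : gadget :=
  @Gadget k.+1 [set [set (ord0 : 'I_k.+1)]; [set i : 'I_k.+1 | i != ord0]].

Definition nor_gate : gadget :=
  @Gadget 3 [set set0; [set (@inord 2 0); (@inord 2 2)]; [set (@inord 2 1); (@inord 2 2)];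
                 [set (@inord 2 0); (@inord 2 1); (@inord 2 2)]].

Definition in_S (g : gadget) : Prop :=
  g = one_in_three \/ g = free_terminal \/ exists k, 0 < k /\ g = fanout k.

(** A simulation: [nv] internal vertices labelled by gadgets, plus the
    outside-world vertex (encoded as [None]) with [nout] ports, whose
    cyclic order 0,...,nout-1 is the order of the dangling edges around the
    simulation.  Half-edges ("darts") are pairs (vertex, port); the edges
    are given by a fixed-point-free involution [alpha] on darts. *)
Record simulation := Simulation {
  nv : nat;
  lab : 'I_nv -> gadget;
  nout : nat;
}.

Definition deg (s : simulation) (v : option 'I_(nv s)) : nat :=
  match v with Some u => gports (lab u) | None => nout s end.

Definition dart (s : simulation) : finType := {v : option 'I_(nv s) & 'I_(deg v)}.

Definition outside_dart (s : simulation) (p : 'I_(nout s)) : dart s :=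
  @Tagged _ None (fun v => 'I_(deg v)) p.

Definition inner_dart (s : simulation) (v : 'I_(nv s)) (p : 'I_(gports (lab v))) : dart s :=
  @Tagged _ (Some v) (fun v => 'I_(deg v)) p.

Definition is_outside (s : simulation) (d : dart s) : bool := tag d == None.

Definition edge_structure (s : simulation) (alpha : dart s -> dart s) : Prop :=
  [/\ forall d, alpha (alpha d) = d,
      forall d, alpha d != d
    & forall d, is_outside d -> ~~ is_outside (alpha d)].

Definition rot (s : simulation) (d : dart s) : dart s :=
  @Tagged _ (tag d) (fun v => 'I_(deg v)) (ordS (tagged d)).

(** Planarity of the graph including the outside world, with the embedding
    respecting the port cyclic orders (rotation system), via Euler's formula
    for combinatorial maps: V - E + F = 2 C (i.e. every component has
    genus 0).  Faces are the orbits of [rot \o alpha]. *)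
Definition planar (s : simulation) (alpha : dart s -> dart s) : Prop :=
  let V := (nv s).+1 in
  let D := #|dart s| in
  let F := fcard (fun d => rot (alpha d)) (@predT (dart s)) in
  let e := fun d d' : dart s => [|| rot d == d', rot d' == d | alpha d == d'] in
  let C := n_comp (connect e) (@predT (dart s)) in
  2 * V + 2 * F = D + 4 * C.

(** An assignment: [x d] is true iff the edge of dart [d] points into the
    vertex of [d]; the two ends of an edge are oriented consistently
    (every edge is oriented exactly one way). *)
Definition assignment (s : simulation) (alpha : dart s -> dart s)
  (x : {ffun dart s -> bool}) : bool :=
  [forall d, x (alpha d) == ~~ x d].

Definition satisfying (s : simulation) (x : {ffun dart s -> bool}) : bool :=
  [forall v : 'I_(nv s),
    [set p : 'I_(gports (lab v)) | x (inner_dart p)] \in gcon (lab v)].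

Definition valid (s : simulation) alpha (x : {ffun dart s -> bool}) : bool :=
  assignment alpha x && satisfying x.

(** [x] makes exactly the dangling edges in [D] point into the simulation
    (dangling edge [p] points into the simulation iff it points out of the
    outside-world vertex). *)
Definition realizes (s : simulation) (x : {ffun dart s -> bool})
  (D : {set 'I_(nout s)}) : bool :=
  [forall p, (p \in D) == ~~ x (outside_dart p)].

(** The simulated gadget: ports = dangling edges in their order around the
    simulation (cyclic order of the outside-world ports); constraint = the
    realizable sets of dangling edges. *)
Definition sim_gadget (s : simulation) (alpha : dart s -> dart s) : gadget :=
  @Gadget (nout s) [set D | [exists x, valid alpha x && realizes x D]].

Definition parsimonious (s : simulation) (alpha : dart s -> dart s) : Prop :=
  forall (D : {set 'I_(nout s)}) (x1 x2 : {ffun dart s -> bool}),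
    valid alpha x1 -> realizes x1 D -> valid alpha x2 -> realizes x2 D -> x1 = x2.

Definition planar_pars_simulates (S : gadget -> Prop) (G : gadget) : Prop :=
  exists (s : simulation) (alpha : dart s -> dart s),
    [/\ forall v : 'I_(nv s), S (lab v),
        edge_structure alpha,
        planar alpha,
        parsimonious alpha
      & sim_gadget alpha = G].

(* Main.v *)
From HB Require Import structures.
Require Import Defs.
From mathcomp Require Import all_boot.
Set Implicit Arguments. Unset Strict Implicit. Unset Printing Implicit Defensive.

Definition labs : seq gadget := [:: one_in_three; one_in_three; one_in_three; fanout 3;
  fanout 2; fanout 2; free_terminal; free_terminal; free_terminal; free_terminal].
Definition labf (v : 'I_10) : gadget := nth free_terminal labs v.
Definition sim : simulation := @Simulation 10 labf 3.

Fixpoint ords n : seq 'I_n :=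
  match n with 0 => [::] | n'.+1 => ord0 :: map (lift ord0) (ords n') end.

Lemma mem_ords n (i : 'I_n) : i \in ords n.
Proof.
elim: n i => [|n IH] i; first by case: i.
rewrite /= inE; case: (unliftP ord0 i) => [j ->|->]; last by rewrite eqxx.
by rewrite orbC map_f.
Qed.

Lemma forall_ords n (P : pred 'I_n) : [forall i, P i] = all P (ords n).
Proof.
apply/forallP/allP => H i //; apply: H; exact: mem_ords.
Qed.

Definition darts : seq (dart sim) :=
  [seq @outside_dart sim p | p <- ords 3] ++
  flatten [seq [seq @inner_dart sim v p | p <- ords (gports (labf v))] | v <- ords 10].
Definition d0 : dart sim := @outside_dart sim (ord0 : 'I_3).
Definition hd (n : nat) : dart sim := nth d0 darts n.
Definition offs := [:: 3; 6; 9; 12; 16; 19; 22; 23; 24; 25].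
Definition gn (d : dart sim) : nat :=
  match d with
  | existT None p => val p
  | existT (Some v) p => nth 0 offs v + val p
  end.

Lemma gnhd_chk : all (fun n => gn (hd n) == n) (iota 0 26).
Proof. vm_compute. reflexivity. Qed.

Lemma gnhd n : n < 26 -> gn (hd n) = n.
Proof. by move=> Hn; apply/eqP; move/allP: gnhd_chk; apply; rewrite mem_iota. Qed.

Lemma card_dart : #|dart sim| = 26.
Proof.
rewrite card_tagged (eq_map (fun i => card_ord _)).
rewrite enumT unlock /= -enumT -map_comp sumnE big_map big_enum /=.
by rewrite !big_ord_recl big_ord0.
Qed.

Definition ho (i : 'I_26) : dart sim := hd i.
Lemma ho_inj : injective ho.
Proof. move=> i j /(congr1 gn); rewrite !gnhd //; exact: val_inj. Qed.

Lemma hd_onto d : exists2 n, n < 26 & d = hd n.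
Proof.
have : d \in codom ho by apply: (inj_card_onto ho_inj); rewrite card_dart card_ord.
by case/codomP => i ->; exists i.
Qed.

Lemma hdgn d : hd (gn d) = d.
Proof. by case: (hd_onto d) => n Hn ->; rewrite gnhd. Qed.

Lemma gn_lt d : gn d < 26.
Proof. by case: (hd_onto d) => n Hn ->; rewrite gnhd. Qed.
Inductive D26 := Z0 | Z1 | Z2 | Z3 | Z4 | Z5 | Z6 | Z7 | Z8 | Z9 | Z10 | Z11 | Z12 | Z13 | Z14 | Z15 | Z16 | Z17 | Z18 | Z19 | Z20 | Z21 | Z22 | Z23 | Z24 | Z25.
Definition dcode (x : D26) : nat := match x with Z0 => 0 | Z1 => 1 | Z2 => 2 | Z3 => 3 | Z4 => 4 | Z5 => 5 | Z6 => 6 | Z7 => 7 | Z8 => 8 | Z9 => 9 | Z10 => 10 | Z11 => 11 | Z12 => 12 | Z13 => 13 | Z14 => 14 | Z15 => 15 | Z16 => 16 | Z17 => 17 | Z18 => 18 | Z19 => 19 | Z20 => 20 | Z21 => 21 | Z22 => 22 | Z23 => 23 | Z24 => 24 | Z25 => 25 end.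
Definition ddec (m : nat) : D26 := match m with 0 => Z0 | 1 => Z1 | 2 => Z2 | 3 => Z3 | 4 => Z4 | 5 => Z5 | 6 => Z6 | 7 => Z7 | 8 => Z8 | 9 => Z9 | 10 => Z10 | 11 => Z11 | 12 => Z12 | 13 => Z13 | 14 => Z14 | 15 => Z15 | 16 => Z16 | 17 => Z17 | 18 => Z18 | 19 => Z19 | 20 => Z20 | 21 => Z21 | 22 => Z22 | 23 => Z23 | 24 => Z24 | _ => Z25 end.
Definition Dlist : seq D26 := [:: Z0; Z1; Z2; Z3; Z4; Z5; Z6; Z7; Z8; Z9; Z10; Z11; Z12; Z13; Z14; Z15; Z16; Z17; Z18; Z19; Z20; Z21; Z22; Z23; Z24; Z25].

Lemma ddecK : cancel dcode ddec. Proof. by case. Qed.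
HB.instance Definition _ := Countable.copy D26 (can_type ddecK).
Lemma D26_enumP : Finite.axiom Dlist. Proof. by case. Qed.
HB.instance Definition _ := isFinite.Build D26 D26_enumP.

Lemma allD (P : pred D26) : all P Dlist -> forall t, P t.
Proof. by move/allP=> H t; apply: H; case: t. Qed.

Lemma dcode_lt t : dcode t < 26. Proof. by case: t. Qed.
Lemma ddec_code m : m < 26 -> dcode (ddec m) = m.
Proof. by do 26 (case: m => [|m] //). Qed.

Definition atab := [:: 3; 6; 13; 0; 15; 17; 1; 20; 14; 18; 21; 25; 22; 2; 8; 4; 23; 5; 9; 24; 7; 10; 12; 16; 19; 11].
Definition alph (n : nat) : nat := nth 0 atab n.
Definition alpha (d : dart sim) : dart sim := hd (alph (gn d)).

Lemma alph_chk : all (fun n => [&& alph n < 26, alph (alph n) == n & alph n != n]) (iota 0 26).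
Proof. vm_compute. reflexivity. Qed.
Lemma alph_lt n : n < 26 -> alph n < 26.
Proof. by move=> Hn; move/allP: alph_chk => /(_ n); rewrite mem_iota /= => /(_ Hn) /and3P[]. Qed.
Lemma alph_inv n : n < 26 -> alph (alph n) = n.
Proof. by move=> Hn; move/allP: alph_chk => /(_ n); rewrite mem_iota /= => /(_ Hn) /and3P[_ /eqP]. Qed.
Lemma alph_neq n : n < 26 -> alph n != n.
Proof. by move=> Hn; move/allP: alph_chk => /(_ n); rewrite mem_iota /= => /(_ Hn) /and3P[]. Qed.

Lemma alpha_hd n : n < 26 -> alpha (hd n) = hd (alph n).
Proof. by move=> Hn; rewrite /alpha gnhd. Qed.

Lemma outside_chk : all (fun n => is_outside (hd n) ==> ~~ is_outside (hd (alph n))) (iota 0 26).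
Proof. vm_compute. reflexivity. Qed.

Lemma edge_ok : edge_structure alpha.
Proof.
split => d; case: (hd_onto d) => n Hn ->.
- by rewrite !alpha_hd ?alph_lt // alph_inv.
- rewrite alpha_hd //; apply/eqP => /(congr1 gn); rewrite !gnhd ?alph_lt //.
  by apply/eqP; apply: alph_neq.
- rewrite alpha_hd //; move/allP: outside_chk => /(_ n); rewrite mem_iota /= => /(_ Hn).
  exact/implyP.
Qed.

Definition hD (t : D26) : dart sim := hd (dcode t).
Lemma hD_inj : injective hD.
Proof. move=> t u H; apply: (can_inj ddecK); have := congr1 gn H; rewrite !gnhd //; exact: dcode_lt. Qed.
Lemma hD_onto d : d = hD (ddec (gn d)).
Proof. by rewrite /hD ddec_code ?gn_lt // hdgn. Qed.
Lemma codom_hD : predT \subset codom hD.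
Proof. by apply/subsetP => d _; rewrite (hD_onto d) codom_f. Qed.

Definition rn (n : nat) : nat := gn (Defs.rot (hd n)).
Lemma rot_hD t : Defs.rot (hD t) = hD (ddec (rn (dcode t))).
Proof. by rewrite /hD ddec_code ?gn_lt // /rn hdgn. Qed.
Lemma alpha_hD t : alpha (hD t) = hD (ddec (alph (dcode t))).
Proof. by rewrite /hD alpha_hd ?dcode_lt // ddec_code // alph_lt ?dcode_lt. Qed.

Definition ftab := [:: 4; 7; 14; 1; 12; 18; 2; 21; 15; 16; 19; 25; 22; 0; 6; 5; 23; 3;
           10; 24; 8; 11; 13; 17; 20; 9].
Definition rtab := [:: 1; 2; 0; 4; 5; 3; 7; 8; 6; 10; 11; 9; 13; 14; 15; 12; 17; 18; 16;
           20; 21; 19; 22; 23; 24; 25].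
Lemma tab_chk : all (fun n => (nth 0 ftab n == rn (alph n)) && (nth 0 rtab n == rn n)) (iota 0 26).
Proof. vm_compute. reflexivity. Qed.
Lemma ftabE n : n < 26 -> nth 0 ftab n = rn (alph n).
Proof. by move=> Hn; move/allP: tab_chk => /(_ n); rewrite mem_iota /= => /(_ Hn) /andP[/eqP]. Qed.
Lemma rtabE n : n < 26 -> nth 0 rtab n = rn n.
Proof. by move=> Hn; move/allP: tab_chk => /(_ n); rewrite mem_iota /= => /(_ Hn) /andP[_ /eqP]. Qed.

Definition fD (t : D26) : D26 := ddec (nth 0 ftab (dcode t)).
Lemma f_hD t : Defs.rot (alpha (hD t)) = hD (fD t).
Proof. by rewrite alpha_hD rot_hD ddec_code ?alph_lt ?dcode_lt // /fD ftabE ?dcode_lt. Qed.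

Lemma fD_inj_chk : all (fun t => all (fun u => (fD t == fD u) ==> (t == u)) Dlist) Dlist.
Proof. vm_compute. reflexivity. Qed.
Lemma fD_inj : injective fD.
Proof.
move=> t u Htu; apply/eqP.
have := allD fD_inj_chk t => /allP /(_ u).
have Hu : u \in Dlist by case: u {Htu}.
by move=> /(_ Hu) /implyP; apply; rewrite Htu.
Qed.

Lemma f_inj : injective (fun d => Defs.rot (alpha d)).
Proof.
move=> d1 d2; rewrite (hD_onto d1) (hD_onto d2) !f_hD => /hD_inj /fD_inj ->. done.
Qed.

Lemma faces_eq : fcard (fun d => Defs.rot (alpha d)) (@predT (dart sim)) = n_comp (frel fD) [preim hD of predT].
Proof.
have s1 : connect_sym (frel (fun d => Defs.rot (alpha d))) := fconnect_sym f_inj.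
have s2 : connect_sym (frel fD) := fconnect_sym fD_inj.
have cl : closed (frel (fun d => Defs.rot (alpha d))) (@predT (dart sim)) by [].
apply: (adjunction_n_comp hD s1 s2 cl).
apply: (strict_adjunction s2 cl hD_inj codom_hD).
by move=> x y _ /=; rewrite f_hD (inj_eq hD_inj).
Qed.

Lemma faces_val : n_comp (frel fD) [preim hD of predT] = 4.
Proof.
rewrite (@eq_n_comp_r _ _ _ predT) //.
rewrite /n_comp_mem /roots /root /connect /rgraph /pick !cardE /enum_mem unlock.
vm_compute. reflexivity.
Qed.

Definition Erel (d d' : dart sim) : bool := [|| Defs.rot d == d', Defs.rot d' == d | alpha d == d'].
Definition fR (t : D26) : D26 := ddec (nth 0 rtab (dcode t)).
Definition fA (t : D26) : D26 := ddec (alph (dcode t)).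
Definition eD (t u : D26) : bool := [|| fR t == u, fR u == t | fA t == u].

Lemma rot_hD' t : Defs.rot (hD t) = hD (fR t).
Proof. by rewrite rot_hD /fR rtabE ?dcode_lt. Qed.

Lemma e_hD t u : Erel (hD t) (hD u) = eD t u.
Proof. by rewrite /Erel /eD !rot_hD' alpha_hD !(inj_eq hD_inj). Qed.

Lemma eD_chk : all (fun t => all (fun u => eD t u == eD u t) Dlist) Dlist.
Proof. vm_compute. reflexivity. Qed.
Lemma eD_sym : symmetric eD.
Proof.
move=> t u; apply/eqP; move: (allD eD_chk t) => /allP; apply; by case: u.
Qed.
Lemma Erel_sym : symmetric Erel.
Proof. by move=> d d'; rewrite (hD_onto d) (hD_onto d') !e_hD eD_sym. Qed.

Lemma comps_eq : n_comp (connect Erel) (@predT (dart sim)) = n_comp (connect eD) [preim hD of predT].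
Proof.
have s1 : connect_sym Erel := sym_connect_sym Erel_sym.
have s2 : connect_sym eD := sym_connect_sym eD_sym.
have cl : closed Erel (@predT (dart sim)) by [].
have [_ F] := strict_adjunction s2 cl hD_inj codom_hD (fun x y _ => e_hD x y).
have s1' : connect_sym (connect Erel) := sym_connect_sym s1.
have s2' : connect_sym (connect eD) := sym_connect_sym s2.
have cl' : closed (connect Erel) (@predT (dart sim)) by [].
apply: (adjunction_n_comp hD s1' s2' cl').
apply: (strict_adjunction s2' cl' hD_inj codom_hD).
by move=> x y _; rewrite F.
Qed.

Lemma connect_idem (T : finType) (e : rel T) : connect (connect e) =2 connect e.
Proof.
move=> x y; apply/idP/idP; first by apply: connect_sub.
by apply: connect_sub => u v h; apply: connect1; apply: connect1.
Qed.

Lemma comps_val : n_comp (connect eD) [preim hD of predT] = 1.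
Proof.
rewrite (@eq_n_comp_r _ _ _ predT) // (eq_n_comp (@connect_idem _ eD)).
rewrite /n_comp_mem /roots /root /connect /rgraph /pick !cardE /enum_mem unlock.
vm_compute. reflexivity.
Qed.

Lemma planar_ok : planar alpha.
Proof.
have HF : fcard (fun d => Defs.rot (alpha d)) (@predT (dart sim)) = 4 by rewrite faces_eq faces_val.
have HC : n_comp (connect Erel) (@predT (dart sim)) = 1 by rewrite comps_eq comps_val.
rewrite /planar; cbv zeta.
rewrite /Erel in HC.
by rewrite card_dart HF HC.
Qed.

Lemma set_eq_nat k (fn gn : nat -> bool) :
  ([set p : 'I_k | fn p] == [set p : 'I_k | gn p]) = all (fun j => fn j == gn j) (iota 0 k).
Proof.
apply/eqP/allP => [H j | H].
  rewrite mem_iota add0n => /andP[_ Hj].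
  by move/setP: H => /(_ (Ordinal Hj)); rewrite !inE /= => ->.
apply/setP => p; rewrite !inE; apply/eqP; apply: H; by rewrite mem_iota add0n ltn_ord.
Qed.

Lemma eqset_ords k (A B : {set 'I_k}) : (A == B) = all (fun p => (p \in A) == (p \in B)) (ords k).
Proof.
rewrite -forall_ords; apply/eqP/forallP => [-> p|H]; first exact: eqxx.
by apply/setP => p; apply/eqP/H.
Qed.

Lemma set1_nat k j : j < k.+1 -> [set (@inord k j)] = [set p : 'I_k.+1 | (p : nat) == j].
Proof. by move=> Hj; apply/setP => p; rewrite !inE -val_eqE /= inordK. Qed.
Lemma set1_ord0 k : [set (@ord0 k)] = [set p : 'I_k.+1 | (p : nat) == 0].
Proof. by apply/setP => p; rewrite !inE. Qed.
Lemma setnot0 k : [set i : 'I_k.+1 | i != ord0] = [set p : 'I_k.+1 | (p : nat) != 0].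
Proof. by apply/setP => p; rewrite !inE. Qed.
Lemma set0_nat k : (set0 : {set 'I_k}) = [set p : 'I_k | false].
Proof. by apply/setP => p; rewrite !inE. Qed.
Lemma setU_nat k (f g : nat -> bool) :
  [set p : 'I_k | f p] :|: [set p : 'I_k | g p] = [set p : 'I_k | f p || g p].
Proof. by apply/setP => p; rewrite !inE. Qed.

Definition oneof3 a b c := [|| a && ~~ b && ~~ c, ~~ a && b && ~~ c | ~~ a && ~~ b && c].
Definition fan2 a b c := (a && ~~ b && ~~ c) || (~~ a && b && c).
Definition fan3 a b c d := (a && ~~ b && ~~ c && ~~ d) || (~~ a && b && c && d).
Definition norsp a b c := [|| ~~ a && ~~ b && ~~ c, a && ~~ b && c, ~~ a && b && c | a && b && c].

Lemma spec_T (fn : nat -> bool) :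
  ([set p : 'I_3 | fn p] \in gcon one_in_three) = oneof3 (fn 0) (fn 1) (fn 2).
Proof.
rewrite /= !inE !set1_nat // !eqset_ords /= !inE -?val_eqE /= ?inordK // /bump /= /oneof3.
by case: (fn 0); case: (fn 1); case: (fn 2).
Qed.

Lemma spec_F3 (fn : nat -> bool) :
  ([set p : 'I_4 | fn p] \in gcon (fanout 3)) = fan3 (fn 0) (fn 1) (fn 2) (fn 3).
Proof.
rewrite /= !inE set1_ord0 setnot0 !eqset_ords /= !inE -?val_eqE /= ?inordK // /bump /= /fan3.
by case: (fn 0); case: (fn 1); case: (fn 2); case: (fn 3).
Qed.

Lemma spec_F2 (fn : nat -> bool) :
  ([set p : 'I_3 | fn p] \in gcon (fanout 2)) = fan2 (fn 0) (fn 1) (fn 2).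
Proof.
rewrite /= !inE set1_ord0 setnot0 !eqset_ords /= !inE -?val_eqE /= ?inordK // /bump /= /fan2.
by case: (fn 0); case: (fn 1); case: (fn 2).
Qed.

Lemma spec_R (fn : nat -> bool) :
  ([set p : 'I_1 | fn p] \in gcon free_terminal) = true.
Proof.
rewrite /= !inE set1_ord0 set0_nat !eqset_ords /= !inE -?val_eqE /= ?inordK // /bump /=.
by case: (fn 0).
Qed.

Lemma spec_nor (fn : nat -> bool) :
  ([set p : 'I_3 | fn p] \in gcon nor_gate) = norsp (fn 0) (fn 1) (fn 2).
Proof.
rewrite /= !inE !eqset_ords /= !inE -?val_eqE /= ?inordK // /bump /= /norsp.
by case: (fn 0); case: (fn 1); case: (fn 2).
Qed.

Definition specv (m : nat) (f : nat -> bool) : bool :=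
  match m with
  | 0 | 1 | 2 => oneof3 (f 0) (f 1) (f 2)
  | 3 => fan3 (f 0) (f 1) (f 2) (f 3)
  | 4 | 5 => fan2 (f 0) (f 1) (f 2)
  | _ => true
  end.

Lemma sat_v (x : {ffun dart sim -> bool}) (v : 'I_10) :
  ([set p | x (inner_dart p)] \in gcon (labf v)) = specv v (fun j => x (hd (nth 0 offs v + j))).
Proof.
have -> : [set p | x (inner_dart p)] = [set p : 'I_(gports (labf v)) | x (hd (nth 0 offs v + p))].
  by apply/setP => p; rewrite !inE -[inner_dart p]hdgn.
case: v => m Hm.
do 3 (case: m Hm => [|m] Hm; first exact: (spec_T (fun j => x (hd (nth 0 offs (Ordinal Hm) + j))))).
case: m Hm => [|m] Hm; first exact: (spec_F3 (fun j => x (hd (nth 0 offs (Ordinal Hm) + j)))).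
do 2 (case: m Hm => [|m] Hm; first exact: (spec_F2 (fun j => x (hd (nth 0 offs (Ordinal Hm) + j))))).
do 4 (case: m Hm => [|m] Hm; first exact: (spec_R (fun j => x (hd (nth 0 offs (Ordinal Hm) + j))))).
by [].
Qed.

Definition validN (b : nat -> bool) : bool :=
  [&& oneof3 (b 3) (b 4) (b 5), oneof3 (b 6) (b 7) (b 8), oneof3 (b 9) (b 10) (b 11),
      fan3 (b 12) (b 13) (b 14) (b 15), fan2 (b 16) (b 17) (b 18) & fan2 (b 19) (b 20) (b 21)].

Lemma validN_ext b b' : (forall n, n < 26 -> b n = b' n) -> validN b = validN b'.
Proof. by move=> H; rewrite /validN !H. Qed.

Lemma satisfying_eq (x : {ffun dart sim -> bool}) : satisfying x = validN (fun n => x (hd n)).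
Proof.
rewrite /satisfying (eq_forallb (sat_v x)) forall_ords /= /bump /=.
rewrite /validN !andbT. reflexivity.
Qed.

Definition eidL := [:: 0; 1; 2; 0; 3; 6; 1; 9; 4; 7; 10; 12; 5; 2; 4; 3; 8; 6; 7; 11; 9; 10; 5; 8; 11; 12].
Definition sideL := [:: true; true; true; false; true; true; false; true; true; true; true; true; true; false; false; false; true; false; false; true; false; false; false; false; false; false].
Definition R := [:: 0; 1; 2; 4; 8; 12; 5; 9; 16; 7; 10; 19; 11].

Definition expandL (bits : seq bool) : seq bool :=
  [seq (if nth false sideL n then nth false bits (nth 0 eidL n) else ~~ nth false bits (nth 0 eidL n)) | n <- iota 0 26].

Lemma struct_chk : all (fun n => (nth 0 eidL n < 13) &&
   (if nth false sideL n then nth 0 R (nth 0 eidL n) == n else nth 0 R (nth 0 eidL n) == alph n)) (iota 0 26).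
Proof. vm_compute. reflexivity. Qed.

Definition xh (x : {ffun dart sim -> bool}) (n : nat) : bool := x (hd n).
Definition bitsx (x : {ffun dart sim -> bool}) : seq bool := map (xh x) R.

Lemma assign_hd x : assignment alpha x -> forall n, n < 26 -> xh x (alph n) = ~~ xh x n.
Proof.
move=> /forallP H n Hn; move: (H (hd n)); rewrite alpha_hd // => /eqP.
by rewrite /xh.
Qed.

Lemma expand_x x : assignment alpha x -> forall n, n < 26 -> xh x n = nth false (expandL (bitsx x)) n.
Proof.
move=> A n Hn.
rewrite /expandL (nth_map 0) ?size_iota // nth_iota // add0n.
move/allP: struct_chk => /(_ n); rewrite mem_iota /= => /(_ Hn) /andP[He].
rewrite /bitsx (nth_map 0) //.
case: (nth false sideL n) => /eqP ->; first by [].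
by rewrite assign_hd // negbK.
Qed.

Fixpoint allbits (n : nat) : seq (seq bool) :=
  match n with 0 => [:: [::]] | n'.+1 => [seq b :: l | b <- [:: true; false], l <- allbits n'] end.

Lemma mem_allbits (l : seq bool) : l \in allbits (size l).
Proof.
elim: l => [|b l IH] //=.
by rewrite !mem_cat; case: b; rewrite mem_map ?IH ?orbT //; by move=> ? ? [].
Qed.

Definition r1 := [:: true; true; true; true; true; true; false; false; false; false; false; false; true].
Definition r2 := [:: false; false; false; false; false; false; false; false; false; false; false; false; true].
Definition r3 := [:: false; true; false; false; false; false; false; false; false; true; true; true; false].
Definition r4 := [:: true; false; false; false; false; false; true; true; true; false; false; false; false].
Definition recon (l : seq bool) : seq bool :=
  if l == [:: true; true; true] then r1 else
  if l == [:: false; false; false] then r2 else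
  if l == [:: false; true; false] then r3 else
  if l == [:: true; false; false] then r4 else nseq 13 false.

Definition head3 (L : seq bool) := [:: nth false L 0; nth false L 1; nth false L 2].

Lemma chk1 : all (fun bits => let L := expandL bits in
   validN (nth false L) ==> norsp (~~ nth false L 0) (~~ nth false L 1) (~~ nth false L 2)) (allbits 13).
Proof. vm_compute. reflexivity. Qed.

Lemma chk2 : all (fun bits => let L := expandL bits in
   validN (nth false L) ==> (bits == recon (head3 L))) (allbits 13).
Proof. vm_compute. reflexivity. Qed.

Lemma chk3 : all (fun l => norsp (~~ nth false l 0) (~~ nth false l 1) (~~ nth false l 2) ==>
   let L := expandL (recon l) in
   [&& validN (nth false L), head3 L == l & all (fun n => nth false L (alph n) == ~~ nth false L n) (iota 0 26)])
   (allbits 3).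
Proof. vm_compute. reflexivity. Qed.

Lemma chk_at (T : eqType) (P : pred T) s y : all P s -> y \in s -> P y.
Proof. by move/allP; apply. Qed.

Lemma valid_bits x : valid alpha x -> validN (nth false (expandL (bitsx x))).
Proof.
case/andP => A S; rewrite satisfying_eq in S.
by rewrite -(validN_ext (fun n Hn => expand_x A Hn)).
Qed.

Lemma size_bitsx x : size (bitsx x) = 13. Proof. by rewrite size_map. Qed.

Lemma out_hd (x : {ffun dart sim -> bool}) (p : 'I_3) : x (@outside_dart sim p) = xh x p.
Proof. by rewrite /xh -[@outside_dart sim p]hdgn. Qed.

Lemma pars_ok : parsimonious alpha.
Proof.
move=> D x1 x2 V1 R1 V2 R2.
have A1 : assignment alpha x1 by case/andP: V1.
have A2 : assignment alpha x2 by case/andP: V2.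
have M1 : bitsx x1 \in allbits 13 by rewrite -(size_bitsx x1) mem_allbits.
have M2 : bitsx x2 \in allbits 13 by rewrite -(size_bitsx x2) mem_allbits.
have B1 := chk_at chk2 M1; move: B1 => /= /implyP /(_ (valid_bits V1)) B1.
have B2 := chk_at chk2 M2; move: B2 => /= /implyP /(_ (valid_bits V2)) B2.
have H3 : forall j, j < 3 -> xh x1 j = xh x2 j.
  move=> j Hj; move/forallP: R1 => /(_ (Ordinal Hj)); move/forallP: R2 => /(_ (Ordinal Hj)).
  rewrite !out_hd /= => /eqP E2 /eqP E1; apply: negb_inj; by rewrite -E1 -E2.
have Hb : bitsx x1 = bitsx x2.
  rewrite (eqP B1) (eqP B2) /head3 -!expand_x // H3 // H3 // H3 //.
have Hx : forall n, n < 26 -> xh x1 n = xh x2 n.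
  by move=> n Hn; rewrite !expand_x // Hb.
apply/ffunP => d; rewrite -[d]hdgn; exact: Hx (gn_lt d).
Qed.

Lemma gadget_ok : sim_gadget alpha = nor_gate.
Proof.
rewrite /sim_gadget /nor_gate; congr (@Gadget 3 _).
apply/setP => D; rewrite inE.
pose dn (j : nat) := (@inord 2 j) \in D.
have HD : D = [set p : 'I_3 | dn p] by apply/setP => p; rewrite inE /dn inord_val.
have -> : (D \in gcon nor_gate) = norsp (dn 0) (dn 1) (dn 2) by rewrite {1}HD spec_nor.
have Rx : forall x : {ffun dart sim -> bool}, realizes x D -> forall j, j < 3 -> xh x j = ~~ dn j.
  move=> x /forallP Rx j Hj; move: (Rx (@inord 2 j)); rewrite out_hd inordK // => /eqP E.
  by rewrite /dn E negbK.
apply/existsP/idP.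
- case=> x /andP[V R1].
  have A : assignment alpha x by case/andP: V.
  have M : bitsx x \in allbits 13 by rewrite -(size_bitsx x) mem_allbits.
  move: (chk_at chk1 M) => /= /implyP /(_ (valid_bits V)).
  by rewrite !(Rx x R1) // !negbK.
- move=> H.
  pose l := [:: ~~ dn 0; ~~ dn 1; ~~ dn 2].
  have M : l \in allbits 3 by apply: (mem_allbits l).
  have Hl : norsp (~~ nth false l 0) (~~ nth false l 1) (~~ nth false l 2) by rewrite /= !negbK.
  have := chk_at chk3 M; cbv beta zeta; move=> /implyP /(_ Hl) /and3P[V3 /eqP H3 /allP A3].
  set L := expandL (recon l) in V3 H3 A3.
  exists [ffun d => nth false L (gn d)]; apply/andP; split; first (apply/andP; split).
  + apply/forallP => d; rewrite !ffunE; case: (hd_onto d) => n Hn ->.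
    rewrite alpha_hd // !gnhd ?alph_lt //.
    by apply: A3; rewrite mem_iota.
  + rewrite satisfying_eq -(validN_ext (b := nth false L)) //.
    by move=> n Hn; rewrite ffunE gnhd.
  + apply/forallP => p; rewrite out_hd /xh ffunE gnhd; last by apply: (ltn_trans (ltn_ord p)).
    have -> : p \in D = dn p by rewrite {1}HD inE.
    case: p => m Hm /=.
    move: H3; rewrite /head3 /l => -[E0 E1 E2].
    by do 3 (case: m Hm => [|m] Hm; first by rewrite /L /= ?E0 ?E1 ?E2 negbK).
Qed.

Lemma in_S_ok (v : 'I_(nv sim)) : in_S (lab v).
Proof.
case: v => m Hm.
do 3 (case: m Hm => [|m] Hm; first by left).
case: m Hm => [|m] Hm; first by right; right; exists 3.
do 2 (case: m Hm => [|m] Hm; first by right; right; exists 2).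
do 4 (case: m Hm => [|m] Hm; first by right; left).
by [].
Qed.

Theorem mainTheorem13 : planar_pars_simulates in_S nor_gate.
Proof.
exists sim, alpha; split.
- exact: in_S_ok.
- exact: edge_ok.
- exact: planar_ok.
- exact: pars_ok.
- exact: gadget_ok.
Qed.
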